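(* There exists a subset $\mathcal{A}\subseteq\mathbb{Z}$ which is not recursively enumerable but is determinable in finite quotients of $\mathbb{Z}$.
   Context: A subset $A$ of a finitely generated group $G$ is determinable in finite quotients of $G$ if there is an algorithm which, given a surjective homomorphism $\phi$ from $G$ onto a finite group $F$, decides membership in $\phi(A)\subseteq F$. For $G=\mathbb{Z}$ this amounts to an algorithm which, given $n\geq 1$, computes $\mathcal{A}\bmod n=\{r\in\{0,\dots,n-1\}:\exists a\in\mathcal{A},\ a\equiv r\bmod n\}$. *)

(* Defs.v *)
From Stdlib Require Import Arith ZArith List.
Import ListNotations.

Inductive prog : Type :=
| PZero : prog
| PSucc : prog
| PProj : nat -> prog
| PComp : prog -> list prog -> prog
| PPrimRec : prog -> prog -> prog
| PMu : prog -> prog.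

Inductive eval : prog -> list nat -> nat -> Prop :=
| eZero xs : eval PZero xs 0
| eSucc x xs : eval PSucc (x :: xs) (S x)
| eProj i xs : i < length xs -> eval (PProj i) xs (nth i xs 0)
| eComp f gs xs ys y : evals gs xs ys -> eval f ys y -> eval (PComp f gs) xs y
| ePrimRec0 f g xs y : eval f xs y -> eval (PPrimRec f g) (0 :: xs) y
| ePrimRecS f g n xs r y :
    eval (PPrimRec f g) (n :: xs) r -> eval g (n :: r :: xs) y ->
    eval (PPrimRec f g) (S n :: xs) y
| eMu f xs n :
    eval f (n :: xs) 0 ->
    (forall m, m < n -> exists k, eval f (m :: xs) (S k)) ->
    eval (PMu f) xs n
with evals : list prog -> list nat -> list nat -> Prop :=
| esNil xs : evals [] xs []
| esCons g gs xs y ys : eval g xs y -> evals gs xs ys -> evals (g :: gs) xs (y :: ys).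

(* Standard bijection Z -> nat: 0,-1,1,-2,2,... |-> 0,1,2,3,4,... *)
Definition Z_to_nat (z : Z) : nat :=
  if (0 <=? z)%Z then 2 * Z.to_nat z else 2 * Z.to_nat (- z) - 1.

Definition recursively_enumerable (A : Z -> Prop) : Prop :=
  exists p : prog, forall z : Z, A z <-> exists v, eval p [Z_to_nat z] v.

Definition mod_image (A : Z -> Prop) (n : nat) (r : nat) : Prop :=
  exists a : Z, A a /\ Z.modulo a (Z.of_nat n) = Z.of_nat r.

(* Determinable in finite quotients of Z: a total recursive function which,
   given n >= 1, outputs (a bit-vector encoding of) A mod n: bit r of the
   output (r < n) is set iff r is in A mod n. *)
Definition determinable_in_finite_quotients_Z (A : Z -> Prop) : Prop :=
  exists q : prog, forall n : nat, 1 <= n ->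
    exists v : nat, eval q [n] v /\
      forall r : nat, r < n -> (Nat.testbit v r = true <-> mod_image A n r).

(* Main.v *)
Require Import Defs.
From Stdlib Require Import Arith ZArith List Lia Cantor.
Import ListNotations.

Definition tn a b := Cantor.to_nat (a, b).

Lemma tn_inj a b c d : tn a b = tn c d -> a = c /\ b = d.
Proof.
  unfold tn; intro H.
  assert (E := f_equal Cantor.of_nat H).
  rewrite !Cantor.cancel_of_to in E. inversion E; auto.
Qed.

Fixpoint enc (p : prog) : nat :=
  match p with
  | PZero => tn 0 0
  | PSucc => tn 1 0
  | PProj i => tn 2 i
  | PComp f gs =>
      tn 3 (tn (enc f)
        ((fix encl (l : list prog) : nat :=
            match l with [] => 0 | g :: l' => S (tn (enc g) (encl l')) end) gs))
  | PPrimRec f g => tn 4 (tn (enc f) (enc g))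
  | PMu f => tn 5 (enc f)
  end.

Fixpoint encl (l : list prog) : nat :=
  match l with [] => 0 | g :: l' => S (tn (enc g) (encl l')) end.

Lemma enc_comp f gs : enc (PComp f gs) = tn 3 (tn (enc f) (encl gs)).
Proof. reflexivity. Qed.

Fixpoint enc_inj (p : prog) : forall q, enc p = enc q -> p = q.
Proof.
  destruct p as [| |i|f gs|f g|f]; intros [| |j|f' gs'|f1 g1|f1] H;
    try rewrite !enc_comp in H; cbn [enc] in H;
    try (apply tn_inj in H; destruct H as [H1 H2]; discriminate H1).
  - reflexivity.
  - reflexivity.
  - apply tn_inj in H. destruct H as [_ H]. now subst.
  - apply tn_inj in H. destruct H as [_ H]. apply tn_inj in H. destruct H as [H1 H2].
    rewrite (enc_inj f f' H1). f_equal.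
    revert gs' H2. induction gs as [|g gs IH]; intros [|g' gs'] H2; cbn in H2; try discriminate.
    + reflexivity.
    + injection H2 as H2. apply tn_inj in H2. destruct H2 as [Ha Hb].
      rewrite (enc_inj g g' Ha). f_equal. apply IH. exact Hb.
  - apply tn_inj in H. destruct H as [_ H]. apply tn_inj in H. destruct H as [H1 H2].
    now rewrite (enc_inj f f1 H1), (enc_inj g g1 H2).
  - apply tn_inj in H. destruct H as [_ H]. now rewrite (enc_inj f f1 H).
Qed.

Definition dom (p : prog) (z : Z) := exists v, eval p [Z_to_nat z] v.

Definition Adiag (z : Z) : Prop :=
  (z < 0)%Z \/ ((0 <= z)%Z /\ forall p, enc p = Z.to_nat z -> ~ dom p z).

Lemma not_re : ~ recursively_enumerable Adiag.
Proof.
  intros [q Hq].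
  set (z := Z.of_nat (enc q)).
  assert (Hz : Z.to_nat z = enc q) by (unfold z; lia).
  assert (H0 : (0 <= z)%Z) by (unfold z; lia).
  destruct (Hq z) as [H1 H2].
  assert (Hn : ~ dom q z).
  { intro D. destruct (H2 D) as [Hl|[_ Hr]]; [lia|]. exact (Hr q (eq_sym Hz) D). }
  apply Hn. apply H1. right. split; [exact H0|].
  intros p Hp. rewrite (enc_inj p q) by congruence. exact Hn.
Qed.

Definition ADD : prog := PPrimRec (PProj 0) (PComp PSucc [PProj 1]).

Lemma ADD_spec a b : eval ADD [a; b] (a + b).
Proof.
  induction a.
  - apply ePrimRec0. change b with (nth 0 [b] 0) at 2. constructor. simpl; lia.
  - eapply ePrimRecS. exact IHa.
    eapply eComp. constructor. replace (a + b) with (nth 1 [a; a+b; b] 0) by reflexivity.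
    constructor. simpl; lia. constructor. constructor.
Qed.

Definition DBL1 : prog := PComp PSucc [PComp ADD [PProj 1; PProj 1]].
Definition Q : prog := PPrimRec PZero DBL1.

Fixpoint ones (n : nat) : nat := match n with 0 => 0 | S k => S (ones k + ones k) end.

Lemma Q_spec n : eval Q [n] (ones n).
Proof.
  induction n.
  - apply ePrimRec0. constructor.
  - eapply ePrimRecS. exact IHn. unfold DBL1.
    eapply eComp. constructor. eapply eComp.
    constructor. replace (ones n) with (nth 1 [n; ones n] 0) by reflexivity. constructor. simpl; lia.
    constructor. replace (ones n) with (nth 1 [n; ones n] 0) by reflexivity. constructor. simpl; lia.
    constructor. apply ADD_spec. constructor. constructor.
Qed.

Lemma ones_bit n r : r < n -> Nat.testbit (ones n) r = true.
Proof.
  revert r. induction n; intros r Hr; [lia|].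
  simpl. replace (S (ones n + ones n)) with (2 * ones n + Nat.b2n true) by (simpl; lia).
  destruct r.
  - apply Nat.testbit_odd_0.
  - rewrite (Nat.testbit_succ_r (ones n) true). apply IHn. lia.
Qed.

Lemma det : determinable_in_finite_quotients_Z Adiag.
Proof.
  exists Q. intros n Hn. exists (ones n). split; [apply Q_spec|].
  intros r Hr. split; intros _; [|apply ones_bit; exact Hr].
  exists (Z.of_nat r - Z.of_nat n)%Z. split.
  - left. lia.
  - replace (Z.of_nat r - Z.of_nat n)%Z with (Z.of_nat r + (-1) * Z.of_nat n)%Z by lia.
    rewrite Z_mod_plus_full. apply Z.mod_small. lia.
Qed.

Theorem mainTheorem5 :
  exists A : Z -> Prop,
    ~ recursively_enumerable A /\ determinable_in_finite_quotients_Z A.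
Proof.
  exists Adiag. split; [exact not_re | exact det].
Qed.
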